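(* Let $G=A(n,\theta)$ with $n=2m+1\ge3$ odd, and let $C$ be a union of conjugacy classes of elements of order $4$ containing, for each conjugacy class $K$ of elements of order $4$, exactly one of $K$ and $K^{(-1)}$. Then every linear character $\lambda$ of $G$ satisfies $\lambda(C)-\overline{\lambda(C)}=0$, and for every nonlinear irreducible character $\chi$ of $G$, $\frac{\chi(C)-\overline{\chi(C)}}{\chi(1)}\in\{2^n i,-2^n i\}$. Consequently the skew adjacency matrix of $\mathrm{Cay}(G,C)$ has all its eigenvalues in $\{0,\,2^n i,\,-2^n i\}$.
   Context: Let $\mathbb{F}_{2^n}$ be the field with $2^n$ elements, $\theta$ a generator of $\mathrm{Gal}(\mathbb{F}_{2^n}/\mathbb{F}_2)$, $a^\theta$ the image of $a$ under $\theta$. $G=A(n,\theta)$ is the group of matrices $\begin{bmatrix}1&a&b\\0&1&a^\theta\\0&0&1\end{bmatrix}$, $a,b\in\mathbb{F}_{2^n}$, denoted $(a,b)$, with $(a,b)(c,d)=(a+c,\,b+d+ac^\theta)$. For $Y\subseteq G$, $Y^{(-1)}=\{y^{-1}:y\in Y\}$ and $\chi(Y)=\sum_{y\in Y}\chi(y)$. The Cayley digraph $\mathrm{Cay}(G,C)$ has vertex set $G$ and an arc from $g$ to $cg$ for each $c\in C$; its skew adjacency matrix $S$ has $(u,v)$ entry $1$ if $(u,v)$ is an arc, $-1$ if $(v,u)$ is an arc, $0$ otherwise. *)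

(* Defs.v *)
From HB Require Import structures.
From mathcomp Require Import all_boot all_order all_algebra all_fingroup all_solvable all_field all_character.
From mathcomp Require Import ring.
Set Implicit Arguments. Unset Strict Implicit. Unset Printing Implicit Defensive.
Import Order.TTheory GRing.Theory Num.Theory.
Local Open Scope ring_scope.

(* theta generates Gal(F / F_2): every ring (= field) automorphism of F is an
   iterate of theta.  (Every ring morphism F -> F fixes the prime field.) *)
Definition gal_generator (F : finFieldType) (th : {rmorphism F -> F}) : Prop :=
  forall f : {rmorphism F -> F}, exists k : nat, forall x, f x = iter k th x.

Definition Agrp (F : finFieldType) (th : {rmorphism F -> F}) : Type := (F * F)%type.

Section AGroup.
Variables (F : finFieldType) (th : {rmorphism F -> F}).
Local Notation Agrp := (@Agrp F th).

HB.instance Definition _ := Finite.on Agrp.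

Definition Amul (x y : Agrp) : Agrp :=
  (x.1 + y.1, x.2 + y.2 + x.1 * th y.1).
Definition Aone : Agrp := (0, 0).
Definition Ainv (x : Agrp) : Agrp := (- x.1, - x.2 + x.1 * th x.1).

Lemma AmulA : associative Amul.
Proof.
move=> [a b] [c d] [e f]; rewrite /Amul /=; congr (_, _); first by rewrite addrA.
by rewrite rmorphD /=; ring.
Qed.

Lemma Amul1 : left_id Aone Amul.
Proof. by move=> [a b]; rewrite /Amul /= !add0r mul0r addr0. Qed.

Lemma AmulV : left_inverse Aone Ainv Amul.
Proof.
move=> [a b]; rewrite /Amul /Aone /Ainv /=; congr (_, _); first by rewrite addNr.
by ring.
Qed.

HB.instance Definition _ := Finite_isGroup.Build Agrp AmulA Amul1 AmulV.

End AGroup.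

(* Skew adjacency matrix of Cay(G, C), rows/columns indexed by enum of gT.
   Arc from g to c g for c in C. *)
Definition skew_adj (gT : finGroupType) (C : {set gT}) : 'M[algC]_#|gT| :=
  \matrix_(i, j)
    (let u := enum_val i in let v := enum_val j in
     if (v * u^-1)%g \in C then 1
     else if (u * v^-1)%g \in C then -1 else 0).

(* Main.v *)
Require Import Defs.
From HB Require Import structures.
From mathcomp Require Import all_boot all_order all_algebra all_fingroup all_solvable all_field all_character.
From mathcomp Require Import ring zify lra.
Set Implicit Arguments. Unset Strict Implicit. Unset Printing Implicit Defensive.
Import Order.TTheory GRing.Theory Num.Theory.
Local Open Scope ring_scope.

Section Field.
Variables (F : finFieldType) (th : {rmorphism F -> F}) (n m : nat).
Hypotheses (hF : #|F| = (2^n)%N) (hn : n = (2 * m + 1)%N) (hgen : gal_generator th).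

Lemma char2 : 2%N \in [pchar F].
Proof. exact: (card_finPcharP hF). Qed.

Lemma two0 : 2%:R = 0 :> F.
Proof. exact: pcharf0 char2. Qed.

Lemma addxx (x : F) : x + x = 0.
Proof. by rewrite -mulr2n -mulr_natr two0 mulr0. Qed.

Lemma oppF (x : F) : - x = x.
Proof. by apply/eqP; rewrite eq_sym -subr_eq0 opprK addxx. Qed.

Lemma sqrD (x y : F) : (x + y) ^+ 2 = x ^+ 2 + y ^+ 2.
Proof. by rewrite sqrrD -mulr_natr two0 mulr0 addr0. Qed.

Lemma frobE : exists k, forall x : F, x ^+ 2 = iter k th x.
Proof.
have [k hk] := hgen (pFrobenius_aut char2).
by exists k => x; rewrite -hk.
Qed.

Lemma iter_fix k (x : F) : th x = x -> iter k th x = x.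
Proof. by move=> h; elim: k => //= k ->. Qed.

Lemma fixth (x : F) : th x = x -> x = 0 \/ x = 1.
Proof.
move=> h; have [k hk] := frobE; have := hk x; rewrite iter_fix // => e.
have : x * (x - 1) = 0 by rewrite mulrBr mulr1 -expr2 e subrr.
by move/eqP; rewrite mulf_eq0 subr_eq0 => /orP[] /eqP; [left|right].
Qed.

Lemma pow2_mod3 : exists q, (2 ^ n = 3 * q + 2)%N.
Proof.
rewrite hn; elim: m => [|k [q hq]]; first by exists 0%N.
exists (4 * q + 2)%N.
have -> : (2 * k.+1 + 1 = (2 * k + 1).+2)%N by lia.
by rewrite !expnS hq; lia.
Qed.

Lemma no3 (u : F) : u ^+ 3 = 1 -> u = 1.
Proof.
move=> h3; have u0 : u != 0.
  by apply/eqP => u0; move: h3; rewrite u0 expr0n /= => /eqP; rewrite eq_sym oner_eq0.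
have := expf_card u; rewrite hF; have [q ->] := pow2_mod3.
rewrite exprD exprM h3 expr1n mul1r expr2 => h.
by apply: (mulIf u0); rewrite mul1r.
Qed.

Lemma iter_inv (u : F) j : th u = u^-1 -> iter j th u = if odd j then u^-1 else u.
Proof.
move=> h; elim: j => [|j IH] //=; rewrite IH; case: (odd j) => /=.
  by rewrite fmorphV h invrK.
exact: h.
Qed.

Lemma thinv (u : F) : u * th u = 1 -> u = 1.
Proof.
move=> h; have u0 : u != 0 by apply/eqP => u0; move: h; rewrite u0 mul0r => /eqP; rewrite eq_sym oner_eq0.
have hi : th u = u^-1 by rewrite -[th u]mul1r -(mulVf u0) -mulrA h mulr1.
have [k hk] := frobE; have := hk u; rewrite iter_inv //; case: (odd k) => e.
  apply: no3; rewrite exprS e mulfV //.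
by apply: (mulIf u0); rewrite mul1r -expr2.
Qed.

Definition Tr (x : F) := \sum_(j < n) x ^+ (2 ^ j).

Lemma frobD j (x y : F) : (x + y) ^+ (2 ^ j) = x ^+ (2 ^ j) + y ^+ (2 ^ j).
Proof. by elim: j => // j IH; rewrite expnSr !exprM IH sqrD. Qed.

Lemma TrD x y : Tr (x + y) = Tr x + Tr y.
Proof. by rewrite /Tr -big_split /=; apply: eq_bigr => j _; rewrite frobD. Qed.

Lemma sqr_sum (I : Type) (r : seq I) (P : pred I) (g : I -> F) :
  (\sum_(i <- r | P i) g i) ^+ 2 = \sum_(i <- r | P i) (g i) ^+ 2.
Proof. exact: (big_morph (fun x => x ^+ 2) sqrD (expr0n _ _)). Qed.

Lemma n_gt0 : (0 < n)%N. Proof. by rewrite hn addn1. Qed.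

Lemma Tr_sq x : Tr x ^+ 2 = Tr x.
Proof.
rewrite /Tr sqr_sum.
have e : forall j, (x ^+ (2 ^ j)) ^+ 2 = x ^+ (2 ^ j.+1) by move=> j; rewrite expnSr exprM.
under eq_bigr do rewrite e.
have hx : x ^+ (2 ^ n) = x by rewrite -hF expf_card.
move: hx; case: n n_gt0 => // n' _ hx.
rewrite -(big_mkord xpredT (fun j => x ^+ (2 ^ j.+1))) -(big_mkord xpredT (fun j => x ^+ (2 ^ j))).
have A := @big_nat_recl _ 0 +%R n'.+1 0 (fun j => x ^+ (2 ^ j)) isT.
have B := @big_nat_recr _ 0 +%R n'.+1 0 (fun j => x ^+ (2 ^ j)) isT.
move: A; rewrite B /= hx expn0 expr1 addrC => /addrI <-.
done.
Qed.

Lemma Tr01 x : Tr x = 0 \/ Tr x = 1.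
Proof.
have : Tr x * (Tr x - 1) = 0 by rewrite mulrBr mulr1 -expr2 Tr_sq subrr.
by move/eqP; rewrite mulf_eq0 subr_eq0 => /orP[] /eqP; [left|right].
Qed.

Lemma Trth x : Tr (th x) = Tr x.
Proof.
have : th (Tr x) = Tr (th x) by rewrite rmorph_sum; apply: eq_bigr => j _; rewrite rmorphXn.
by case: (Tr01 x) => ->; rewrite ?rmorph0 ?rmorph1.
Qed.

Lemma Tr1 : Tr 1 = 1.
Proof.
rewrite /Tr; under eq_bigr do rewrite expr1n.
by rewrite sumr_const card_ord hn natrD natrM two0 mul0r add0r.
Qed.

Lemma one_neq0F : (1 : F) != 0. Proof. exact: oner_neq0. Qed.

Lemma surjH (t : F) : Tr t = 0 -> exists u, u + th u = t.
Proof.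
move=> ht.
pose H := [set x : F | Tr x == 0].
pose phi u := u + th u.
have sub : phi @: H \subset H.
  apply/subsetP => _ /imsetP[u uH ->]; rewrite inE /phi TrD Trth addxx.
  done.
have inj : {in H &, injective phi}.
  move=> u v; rewrite !inE /phi => /eqP hu /eqP hv e.
  have hf : th (u + v) = u + v.
    rewrite rmorphD; apply/eqP; rewrite -subr_eq0 oppF.
    have -> : th u + th v + (u + v) = (u + th u) + (v + th v) by ring.
    by rewrite e addxx.
  case: (fixth hf) => h.
    by apply/eqP; rewrite -subr_eq0 oppF h.
  by move: (TrD u v); rewrite h Tr1 hu hv addr0 => /eqP; rewrite oner_eq0.
have eqH : phi @: H = H by apply/eqP; rewrite eqEcard sub (card_in_imset inj) leqnn.
have : t \in phi @: H by rewrite eqH inE ht.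
by case/imsetP => u _ ->; exists u.
Qed.


Definition w (a : F) := (a * th a)^-1.

Lemma winj : injective w.
Proof.
have key : forall a b : F, b != 0 -> a * th a = b * th b -> a = b.
  move=> a b b0 e; have bb0 : b * th b != 0 by rewrite mulf_neq0 // fmorph_eq0.
  have u1 : (a / b) * th (a / b) = 1.
    rewrite fmorph_div mulrACA -invfM -e mulfV //.
    by rewrite e.
  by have := thinv u1; move/(congr1 (fun x => x * b)); rewrite mulfVK // mul1r.
move=> a b /invr_inj e.
have [b0|b0] := eqVneq b 0; last exact: key.
have [a0|a0] := eqVneq a 0; first by rewrite a0 b0.
by symmetry; apply: key; rewrite ?e.
Qed.

Lemma w0 : w 0 = 0. Proof. by rewrite /w mul0r invr0. Qed.

Lemma w_neq0 a : a != 0 -> w a != 0.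
Proof. by move=> a0; rewrite invr_eq0 mulf_neq0 // fmorph_eq0. Qed.

Lemma wK a : a != 0 -> w a * (a * th a) = 1.
Proof. by move=> a0; rewrite mulVf // mulf_neq0 // fmorph_eq0. Qed.

Definition sg (t : F) : algC := if t == 0 then 1 else -1.
Definition chr (v t : F) : algC := sg (Tr (v * t)).

Lemma Tr0 : Tr 0 = 0.
Proof. by rewrite /Tr big1 // => j _; rewrite expr0n expn_eq0. Qed.

Lemma sgD x y : sg (Tr x + Tr y) = sg (Tr x) * sg (Tr y).
Proof.
rewrite /sg; case: (Tr01 x) => ->; case: (Tr01 y) => ->; rewrite ?addr0 ?add0r ?addxx ?eqxx ?oner_eq0 /=;
  by rewrite ?mulr1 ?mul1r ?mulrNN ?mulr1.
Qed.

Lemma chrD v s t : chr v (s + t) = chr v s * chr v t.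
Proof. by rewrite /chr mulrDr TrD sgD. Qed.

Lemma chrDv v v' t : chr (v + v') t = chr v t * chr v' t.
Proof. by rewrite /chr mulrDl TrD sgD. Qed.

Lemma chr0 t : chr 0 t = 1.
Proof. by rewrite /chr mul0r Tr0 /sg eqxx. Qed.

Lemma chrC v t : chr v t = chr t v.
Proof. by rewrite /chr mulrC. Qed.

Lemma chr_sq v t : chr v t * chr v t = 1.
Proof. by rewrite -chrD addxx /chr mulr0 Tr0 /sg eqxx. Qed.

Lemma chr_inv v : v != 0 -> chr v v^-1 = -1.
Proof. by move=> v0; rewrite /chr mulfV // Tr1 /sg oner_eq0. Qed.

Lemma chr_sum v : \sum_t chr v t = if v == 0 then #|F|%:R else 0.
Proof.
have [->|v0] := eqVneq v 0.
  by under eq_bigr do rewrite chr0; rewrite sumr_const.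
set S := \sum_t _.
have : S = - S.
  rewrite {1}/S (reindex_inj (addIr v^-1)) /=.
  under eq_bigr do rewrite chrD chr_inv // mulrN1.
  by rewrite sumrN.
move/eqP; rewrite -subr_eq0 opprK -mulr2n -mulr_natr mulf_eq0 pnatr_eq0 orbF.
by move/eqP.
Qed.


Variable (C : {set Agrp th}).
Hypotheses (hC4 : {in C, forall x, #[x]%g = 4%N})
 (hCcl : {in C, forall x, (x ^: [set: Agrp th] \subset C)%g})
 (hxor : forall x : Agrp th, #[x]%g = 4%N ->
     ((x ^: [set: Agrp th])%g \subset C) (+) (((x ^: [set: Agrp th])^-1)%g \subset C)).

Local Notation gT := (Agrp th).

Lemma mulE (x y : gT) : (x * y)%g = (x.1 + y.1, x.2 + y.2 + x.1 * th y.1).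
Proof. by []. Qed.
Lemma invE (x : gT) : (x^-1)%g = (- x.1, - x.2 + x.1 * th x.1).
Proof. by []. Qed.
Lemma oneE : (1 : gT)%g = (0, 0).
Proof. by []. Qed.

Lemma conjE (x y : gT) : (x ^ y)%g = (x.1, x.2 - y.1 * th x.1 + x.1 * th y.1).
Proof.
rewrite conjgE !mulE invE /=; congr (_, _); rewrite ?rmorphD ?rmorphN; ring.
Qed.

Lemma expg2E (x : gT) : (x ^+ 2)%g = (0, x.1 * th x.1).
Proof. by rewrite expgS expg1 mulE !addxx add0r. Qed.

Lemma ord4 (x : gT) : x.1 != 0 -> #[x]%g = 4%N.
Proof.
move=> x0.
have h4 : (#[x]%g %| 4)%N.
  rewrite order_dvdn (expgM x 2 2) expg2E expg2E /= mul0r oneE //.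
have h2 : ~~ (#[x]%g %| 2)%N.
  rewrite order_dvdn expg2E oneE; apply/eqP => [[]] /eqP.
  by rewrite mulf_eq0 fmorph_eq0 orbb (negPf x0).
move: (#[x]%g) h4 h2 => k; case: k => [|[|[|[|[|k]]]]] // /dvdn_leq; lia.
Qed.

Lemma ord_not4 (x : gT) : x.1 = 0 -> #[x]%g <> 4%N.
Proof.
move=> x0 h; have : (#[x]%g %| 2)%N by rewrite order_dvdn expg2E x0 mul0r.
by rewrite h.
Qed.

Lemma Cne0 (x : gT) : x \in C -> x.1 != 0.
Proof. by move=> xC; apply/eqP => x0; exact: (ord_not4 x0 (hC4 xC)). Qed.

Lemma classC (x : gT) : (x ^: [set: gT] \subset C)%g = (x \in C).
Proof.
apply/idP/idP => [h|xC]; last exact: hCcl.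
by apply: (subsetP h); exact: class_refl.
Qed.

Lemma CJ (x y : gT) : ((x ^ y)%g \in C) = (x \in C).
Proof.
apply/idP/idP => h.
  rewrite -(conjgK y x); apply: (subsetP (hCcl h)); by apply: memJ_class; rewrite inE.
by apply: (subsetP (hCcl h)); by apply: memJ_class; rewrite inE.
Qed.

Lemma classVC (x : gT) : ((x ^: [set: gT])^-1 \subset C)%g = (x^-1 \in C)%g.
Proof.
apply/idP/idP => [h|xC].
  by apply: (subsetP h); rewrite inE invgK class_refl.
apply/subsetP => y; rewrite inE => /imsetP[z _ ez].
by rewrite -(invgK y) ez -conjVg CJ.
Qed.

Lemma Cxor (x : gT) : x.1 != 0 -> (x \in C) (+) (x^-1 \in C)%g.
Proof. by move=> x0; have := hxor (ord4 x0); rewrite classC classVC. Qed.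

Definition fC (x : gT) : algC := (x \in C)%:R - ((x^-1)%g \in C)%:R.

Lemma fV (x : gT) : fC (x^-1)%g = - fC x.
Proof. by rewrite /fC invgK opprB. Qed.

Lemma fJ (x y : gT) : fC (x ^ y)%g = fC x.
Proof. by rewrite /fC -conjVg !CJ. Qed.

Lemma f0 (x : gT) : x.1 = 0 -> fC x = 0.
Proof.
move=> x0; rewrite /fC.
have h1 : (x \in C) = false by apply/negbTE/negP => /Cne0; rewrite x0 eqxx.
have h2 : ((x^-1)%g \in C) = false.
  apply/negbTE/negP => /Cne0. rewrite invE /= x0 oppr0 eqxx //.
by rewrite h1 h2 subrr.
Qed.

Lemma fsq (x : gT) : x.1 != 0 -> fC x * fC x = 1.
Proof.
move=> /Cxor; rewrite /fC; case: (x \in C); case: (_ \in C) => //= _;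
  by rewrite ?subr0 ?mulr1 ?sub0r ?mulrNN ?mulr1.
Qed.

Lemma fcase1 (a t : F) : Tr (w a * t) = 0 -> fC (a, t) = fC (a, 0).
Proof.
move=> ht; have [->|a0] := eqVneq a 0; first by rewrite !f0.
have [u hu] := surjH ht.
have -> : ((a, t) : gT) = conjg ((a, 0) : gT) ((a * u, 0) : gT).
  rewrite conjE /=; congr (_, _).
  have eau : th (a * u) = th a * th u by exact: rmorphM.
  rewrite eau sub0r oppF.
  have -> : a * u * th a + a * (th a * th u) = (a * th a) * (u + th u) by ring.
  by rewrite hu mulrA [a * th a * w a]mulrC wK // mul1r.
by rewrite fJ.
Qed.

Lemma fstruct (a t : F) : fC (a, t) = fC (a, 0) * chr (w a) t.
Proof.
have [->|a0] := eqVneq a 0; first by rewrite !f0 ?mul0r.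
rewrite /chr; case: (Tr01 (w a * t)) => ht.
  by rewrite fcase1 // ht /sg eqxx mulr1.
have -> : ((a, t) : gT) = (((a, t + a * th a) : gT)^-1)%g.
  by rewrite invE /= !oppF -addrA addxx addr0.
rewrite fV fcase1 ?ht /sg ?oner_eq0 ?mulrN1 //.
by rewrite mulrDr TrD ht wK // Tr1 addxx.
Qed.

Lemma fsum0 (a : F) : \sum_(b : F) fC (a, b) = 0.
Proof.
have [->|a0] := eqVneq a 0; first by rewrite big1 // => b _; rewrite f0.
under eq_bigr do rewrite fstruct.
by rewrite -mulr_sumr chr_sum (negPf (w_neq0 a0)) mulr0.
Qed.

Lemma sum_gT (G : gT -> algC) : \sum_(x : gT) G x = \sum_(a : F) \sum_(b : F) G (a, b).
Proof. by rewrite pair_big; apply: eq_bigr => -[a b]. Qed.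

Definition conv (phi psi : gT -> algC) (h : gT) :=
  \sum_(x : gT) phi x * psi (h * x^-1)%g.

Local Notation N := (#|F|%:R : algC).

Lemma mulinvE (p q a b : F) :
  (((p, q) : gT) * (((a, b) : gT)^-1))%g = (p + a, b + (q + a * th a + p * th a)).
Proof.
rewrite mulE invE /=; have eN : th (- a) = - th a by exact: rmorphN.
by rewrite eN !oppF; congr (_, _); ring.
Qed.

Lemma termE (p q a b : F) :
  fC (a, b) * fC (((p, q) : gT) * (((a, b) : gT)^-1))%g =
  (fC (a, 0) * fC (p + a, 0) * chr (w (p + a)) (q + a * th a + p * th a))
  * chr (w a + w (p + a)) b.
Proof.
rewrite mulinvE fstruct [fC (p + a, _)]fstruct chrD chrDv; ring.
Qed.

Lemma chr_waa a : a != 0 -> chr (w a) (a * th a) = -1.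
Proof. by move=> a0; rewrite /chr wK // Tr1 /sg oner_eq0. Qed.

Lemma addF_eq0 (x y : F) : (x + y == 0) = (x == y).
Proof. by rewrite -[RHS]subr_eq0 oppF. Qed.

Lemma eq_addl (a p : F) : (a == p + a) = (p == 0).
Proof. by rewrite eq_sym -subr_eq0 addrK. Qed.

Lemma key1 (h : gT) :
  conv fC fC h = - (N * N) * (h == 1%g)%:R + N * (h.1 == 0)%:R.
Proof.
case: h => p q; rewrite /conv sum_gT.
under eq_bigr do under eq_bigr do rewrite termE.
under eq_bigr => a _ do rewrite -mulr_sumr chr_sum addF_eq0 (inj_eq winj) eq_addl.
have [p0|p0] /= := eqVneq p 0; last first.
  rewrite big1 ?mulr0 //; last by move=> a _; rewrite mulr0.
  rewrite oneE; have -> : ((p, q) == (0, 0)) = false by apply/negbTE; apply: contra p0 => /eqP [->].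
  by rewrite mulr0 addr0.
rewrite p0 -mulr_suml.
have hterm : forall a, fC (a, 0) * fC (0 + a, 0) * chr (w (0 + a)) (q + a * th a + 0 * th a)
   = - chr (w a) q + (a == 0)%:R * chr (w a) q.
  move=> a; rewrite add0r mul0r addr0.
  have [->|a0] := eqVneq a 0.
    by rewrite !f0 // !mul0r mul1r addNr.
  by rewrite fsq // chrD chr_waa // mul1r mul0r addr0 mulrN1.
under eq_bigr do rewrite hterm.
rewrite big_split /= sumrN.
rewrite [\sum_(i : F) (i == 0)%:R * _](bigD1 0) //= eqxx mul1r [\sum_(i | i != 0) _]big1 ?addr0; last first.
  by move=> a /negbTE ->; rewrite mul0r.
rewrite w0 chr0.
have e : \sum_(a : F) chr (w a) q = \sum_(v : F) chr v q by rewrite [RHS](reindex_inj winj).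
rewrite e.
under eq_bigr do rewrite chrC.
rewrite chr_sum oneE xpair_eqE eqxx /=.
case: (q == 0) => /=; ring.
Qed.

Definition Kf (h : gT) : algC := - (N * N) * (h == 1%g)%:R + N * (h.1 == 0)%:R.

Definition Mat (phi : gT -> algC) : 'M[algC]_#|(gT : finType)| :=
  \matrix_(i, j) phi (enum_val j * (enum_val i)^-1)%g.

Lemma sum_enum (G : gT -> algC) : \sum_(j < #|(gT : finType)|) G (enum_val j) = \sum_(y : gT) G y.
Proof.
rewrite [RHS](reindex (enum_val : 'I_#|(gT:finType)| -> gT)) //.
by apply: onW_bij; exact: enum_val_bij.
Qed.

Lemma MatM phi psi : Mat phi *m Mat psi = Mat (conv phi psi).
Proof.
apply/matrixP => i k; rewrite !mxE /conv.
under eq_bigr do rewrite !mxE.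
rewrite (sum_enum (fun y => phi (y * (enum_val i)^-1)%g * psi (enum_val k * y^-1)%g)).
rewrite (reindex_inj (mulIg (enum_val i))) /=.
by apply: eq_bigr => x _; rewrite mulgK invMg mulgA.
Qed.

Lemma CnotV (y : gT) : y \in C -> ((y^-1)%g \in C) = false.
Proof. by move=> yC; have := Cxor (Cne0 yC); rewrite yC; case: (_ \in C). Qed.

Lemma skewE : skew_adj C = Mat fC.
Proof.
apply/matrixP => i j; rewrite !mxE /fC.
set y := (enum_val j * (enum_val i)^-1)%g.
have -> : (enum_val i * (enum_val j)^-1)%g = (y^-1)%g by rewrite /y invMg invgK.
case: ifP => [h|_]; first by rewrite CnotV // subr0.
case: ((y^-1)%g \in C); rewrite /= ?sub0r ?subr0 ?subrr. all: try reflexivity. all: by rewrite ?oppr0.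
Qed.

Lemma sumZ0 (h : gT) : \sum_(x : gT) (x.1 == 0)%:R * fC (h * x^-1)%g = 0.
Proof.
case: h => p q; rewrite sum_gT (bigD1 0) //= [\sum_(i | i != 0) _]big1 ?addr0; last first.
  by move=> a /negbTE ->; rewrite big1 // => b _; rewrite mul0r.
rewrite eqxx; under eq_bigr do rewrite mul1r mulinvE.
rewrite (reindex_inj (addIr (q + 0 * th 0 + p * th 0))) /=.
under eq_bigr do rewrite -addrA addxx !addr0.
exact: fsum0.
Qed.

Lemma sumZ0c (c : algC) (h : gT) : \sum_(x : gT) c * (x.1 == 0)%:R * fC (h * x^-1)%g = 0.
Proof. by under eq_bigr do rewrite -mulrA; rewrite -mulr_sumr sumZ0 mulr0. Qed.

Lemma convK (h : gT) : conv Kf fC h = - (N * N) * fC h.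
Proof.
rewrite /conv /Kf.
under eq_bigr do rewrite mulrDl.
rewrite big_split /= sumZ0c addr0.
rewrite (bigD1 1%g) //= eqxx big1 ?addr0; last first.
  by move=> x /negbTE ->; rewrite mulr0 mul0r.
by rewrite mulr1 invg1 mulg1.
Qed.

Lemma skew3 : skew_adj C *m skew_adj C *m skew_adj C = - (N * N) *: skew_adj C.
Proof.
rewrite skewE !MatM; apply/matrixP => i j; rewrite !mxE -convK /conv.
by apply: eq_bigr => x _; congr (_ * _); exact: key1.
Qed.

Lemma NE : N = 2%:R ^+ n.
Proof. by rewrite hF natrX. Qed.

Lemma N_neq0 : N != 0.
Proof. by rewrite pnatr_eq0 hF expn_eq0. Qed.

Lemma cube_roots (a : algC) : a ^+ 3 + N * N * a = 0 ->
  a \in [:: 0; 2%:R ^+ n * 'i; - (2%:R ^+ n * 'i)].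
Proof.
move=> h.
have : a * ((a - N * 'i) * (a + N * 'i)) = 0.
  have -> : a * ((a - N * 'i) * (a + N * 'i)) = a ^+ 3 - N * N * a * ('i * 'i) by ring.
  by rewrite mulCii mulrN1 opprK.
rewrite -NE !inE; move/eqP; rewrite !mulf_eq0 subr_eq0 addr_eq0.
by case/orP => [->|/orP[]->]; rewrite ?orbT.
Qed.

Lemma eig_main (a : algC) : eigenvalue (skew_adj C) a ->
  a \in [:: 0; 2%:R ^+ n * 'i; - (2%:R ^+ n * 'i)].
Proof.
case/eigenvalueP => v hv v0; apply: cube_roots.
have e1 : v *m (skew_adj C *m skew_adj C *m skew_adj C) = (a ^+ 3) *: v.
  by rewrite !mulmxA hv -!scalemxAl hv -scalemxAl hv !scalerA -!expr2 -exprSr.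
have e2 : v *m (skew_adj C *m skew_adj C *m skew_adj C) = (- (N * N) * a) *: v.
  by rewrite skew3 -scalemxAr hv scalerA.
have : (a ^+ 3 + N * N * a) *: v = 0.
  have e3 : (N * N * a) *: v = - (v *m (skew_adj C *m skew_adj C *m skew_adj C)).
    by rewrite e2 mulNr scaleNr opprK.
  by rewrite scalerDl -e1 e3 subrr.
by move/eqP; rewrite scaler_eq0 (negPf v0) orbF => /eqP.
Qed.

Local Notation G := ([set: gT]%G).

Lemma inG (x : gT) : x \in G. Proof. by rewrite inE. Qed.

Definition Mi (i : Iirr G) := \sum_(x : gT) fC x *: 'Chi_i x.
Definition Pi (i : Iirr G) := \sum_(h : gT) (h.1 == 0)%:R *: 'Chi_i h.

Lemma Mi_cent (i : Iirr G) : centgmx 'Chi_i (Mi i).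
Proof.
apply/centgmxP => y _; rewrite /Mi mulmx_suml mulmx_sumr.
under eq_bigr do rewrite -scalemxAl -repr_mxM ?inG //.
under [RHS]eq_bigr do rewrite -scalemxAr -repr_mxM ?inG //.
rewrite [RHS](reindex_inj (conjg_inj y)) /=.
apply: eq_bigr => x _; rewrite fJ; congr (_ *: 'Chi_i _).
by rewrite conjgE mulKVg.
Qed.

Lemma Mi_scalar (i : Iirr G) : exists c, Mi i = c%:M.
Proof.
apply/is_scalar_mxP; apply: (mx_abs_irr_cent_scalar _ (Mi_cent i)).
exact/groupC/socle_irr.
Qed.

Lemma chiE (i : Iirr G) (x : gT) : 'chi_i x = \tr ('Chi_i x).
Proof. by rewrite -irrRepr cfunE inG mulr1n. Qed.

Lemma tr_Mi (i : Iirr G) : \tr (Mi i) = \sum_(x : gT) fC x * 'chi_i x.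
Proof.
rewrite /Mi raddf_sum; apply: eq_bigr => x _ /=; by rewrite mxtraceZ chiE.
Qed.

Lemma chiC_diff (i : Iirr G) :
  (\sum_(y in C) 'chi_i y) - (\sum_(y in C) 'chi_i y)^* = \sum_(x : gT) fC x * 'chi_i x.
Proof.
rewrite rmorph_sum /=.
under [X in _ - X]eq_bigr do rewrite -irr_inv.
have e : \sum_(y in C) 'chi_i (y^-1)%g = \sum_(x | (x^-1)%g \in C) 'chi_i x.
  by rewrite [RHS](reindex_inj invg_inj) /=; apply: eq_bigl => y; rewrite invgK.
rewrite e /fC; under [RHS]eq_bigr do rewrite mulrBl.
rewrite sumrB big_mkcond [X in _ - X = _]big_mkcond /=.
by congr (_ - _); apply: eq_bigr => x _; case: (_ \in C); rewrite ?mul1r ?mul0r.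
Qed.

Lemma MiM (i : Iirr G) : Mi i *m Mi i = \sum_(h : gT) conv fC fC h *: 'Chi_i h.
Proof.
rewrite /Mi mulmx_suml.
under eq_bigr => x _ do rewrite mulmx_sumr.
rewrite exchange_big /=.
under eq_bigr => y _ do
  rewrite (reindex_inj (mulIg (y^-1)%g)) /=.
rewrite exchange_big /=; apply: eq_bigr => h _.
rewrite /conv scaler_suml; apply: eq_bigr => y _.
rewrite -scalemxAl -scalemxAr scalerA -repr_mxM ?inG // mulgKV.
by rewrite mulrC.
Qed.

Lemma sumZ1 (y : gT) : \sum_(x : gT) fC x * ((x^-1 * y)%g.1 == 0)%:R = 0.
Proof.
rewrite sum_gT big1 // => a _.
under eq_bigr => b _ do rewrite [(_ * y)%g]mulE invE /=.
by rewrite -mulr_suml fsum0 mul0r.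
Qed.

Lemma MiP (i : Iirr G) : Mi i *m Pi i = 0.
Proof.
rewrite /Mi /Pi mulmx_suml.
under eq_bigr => x _ do rewrite mulmx_sumr.
under eq_bigr => x _ do rewrite (reindex_inj (mulgI (x^-1)%g)) /=.
rewrite exchange_big /= big1 // => y _.
rewrite -[RHS](scale0r ('Chi_i y)) -(sumZ1 y) scaler_suml; apply: eq_bigr => x _.
by rewrite -scalemxAl -scalemxAr scalerA -repr_mxM ?inG // mulKVg.
Qed.

Hypothesis (hn3 : (3 <= n)%N).

Lemma exists_u : exists u : F, (u != 0) && (u != 1).
Proof.
have : ~~ ([set: F] \subset [set 0; 1]).
  apply/negP => /subset_leq_card; rewrite cardsT cards2 hF.
  have : (2 ^ 3 <= 2 ^ n)%N by rewrite leq_exp2l.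
  by case: (_ != _) => /=; lia.
case/subsetPn => u _; rewrite !inE negb_or => h; by exists u.
Qed.

Lemma conj_rep (a t : F) : a != 0 -> Tr (w a * t) = 0 ->
  exists y : gT, ((a, t) : gT) = conjg ((a, 0) : gT) y.
Proof.
move=> a0 ht; have [u hu] := surjH ht.
exists ((a * u, 0) : gT); rewrite conjE /=; congr (_, _).
have eau : th (a * u) = th a * th u by exact: rmorphM.
rewrite eau sub0r oppF.
have -> : a * u * th a + a * (th a * th u) = (a * th a) * (u + th u) by ring.
by rewrite hu mulrA [a * th a * w a]mulrC wK // mul1r.
Qed.

Lemma Zder (t : F) : ((0, t) : gT) \in G^`(1)%g.
Proof.
have [->|t0] := eqVneq t 0; first exact: (group1 (G^`(1))%G).
have [u /andP[u0 u1]] := exists_u.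
pose v := u + th u.
have v0 : v != 0.
  apply/eqP => /eqP; rewrite addF_eq0 eq_sym => /eqP /fixth [] /eqP; by rewrite ?(negPf u0) ?(negPf u1).
have trv : Tr v = 0 by rewrite /v TrD Trth addxx.
have [winv wK1 wK2] := injF_bij winj.
pose a := winv (v / t).
have wa : w a = v / t by rewrite /a wK2.
have a0 : a != 0.
  by apply/eqP => a0; move: wa; rewrite a0 w0 => /eqP; rewrite eq_sym mulf_eq0 invr_eq0 (negPf v0) (negPf t0).
have trwa : Tr (w a * t) = 0 by rewrite wa divfK.
have [y hy] := conj_rep a0 trwa.
have -> : ((0, t) : gT) = [~ ((a, 0) : gT), y]%g.
  by rewrite /commg -hy mulE invE /=; congr (_, _); ring.
by apply: mem_commg; rewrite inG.
Qed.

Lemma rhoZ (i : Iirr G) (z : gT) : z.1 = 0 -> 'Chi_i z *m Pi i = Pi i.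
Proof.
move=> z0; rewrite /Pi mulmx_sumr.
under eq_bigr do rewrite -scalemxAr -repr_mxM ?inG //.
rewrite [RHS](reindex_inj (mulgI z)) /=; apply: eq_bigr => h _.
by rewrite mulE /= z0 add0r.
Qed.

Lemma MiM2 (i : Iirr G) : Mi i *m Mi i = - (N * N) *: 1%:M + N *: Pi i.
Proof.
rewrite MiM.
under eq_bigr do rewrite key1 scalerDl.
rewrite big_split /= /Pi scaler_sumr; congr (_ + _); last first.
  by apply: eq_bigr => h _; rewrite scalerA.
rewrite (bigD1 1%g) //= [\sum_(h | h != 1%g) _]big1 ?addr0; last first.
  by move=> h /negbTE ->; rewrite mulr0 scale0r.
by rewrite eqxx mulr1 repr_mx1.
Qed.

Lemma deg_neq0 (i : Iirr G) : (irr_degree (socle_of_Iirr i))%:R != 0 :> algC.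
Proof. by rewrite pnatr_eq0 -lt0n irr_degree_gt0. Qed.

Lemma tr_scalar_inj (i : Iirr G) (a b : algC) :
  (a%:M : 'M_(irr_degree (socle_of_Iirr i))) = b%:M -> a = b.
Proof.
move=> e; pose k : 'I_(irr_degree (socle_of_Iirr i)) := Ordinal (irr_degree_gt0 (socle_of_Iirr i)).
by have := congr1 (fun M : 'M_(irr_degree (socle_of_Iirr i)) => M k k) e; rewrite /= !mxE eqxx !mulr1n.
Qed.
Lemma rker_Z (i : Iirr G) : (forall z : gT, z.1 = 0 -> 'Chi_i z = 1%:M) ->
  'chi_i \is a linear_char.
Proof.
move=> hz; rewrite lin_irr_der1 -irrRepr cfker_repr derg1 /commutator gen_subG.
apply/subsetP => _ /imset2P[x y _ _ ->]; apply/rkerP; split; first exact: inG.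
by apply: hz; rewrite /commg mulE invE conjE /= addNr.
Qed.

Lemma sumZN : \sum_(h : gT) (h.1 == 0)%:R = N :> algC.
Proof.
rewrite sum_gT (bigD1 0) //= [\sum_(a | a != 0) _]big1 ?addr0; last first.
  by move=> a /negbTE ha; rewrite big1 // => b _; rewrite /= ha.
by rewrite /= eqxx sumr_const mulr1n.
Qed.

Lemma char_lin (i : Iirr G) : 'chi_i \is a linear_char ->
  (\sum_(y in C) 'chi_i y) - (\sum_(y in C) 'chi_i y)^* = 0.
Proof.
move=> hlin; have [c hc] := Mi_scalar i.
have hz : forall z : gT, z.1 = 0 -> 'Chi_i z = 1%:M.
  case=> a t /= a0; rewrite a0.
  have : ((0, t) : gT) \in cfker 'chi_i by apply: (subsetP (lin_char_der1 hlin)); exact: Zder.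
  by rewrite -irrRepr cfker_repr => /rkerP[].
have hP : Pi i = N *: 1%:M.
  rewrite /Pi -sumZN scaler_suml; apply: eq_bigr => h _.
  by case: eqP => [/hz ->|_]; rewrite ?scale0r.
have := MiM2 i; rewrite hP hc -scalar_mxM !scale_scalar_mx !mulr1 -raddfD /=.
rewrite addNr => /tr_scalar_inj /eqP; rewrite mulf_eq0 orbb => /eqP c0.
by rewrite chiC_diff -tr_Mi hc c0 mxtrace_scalar mul0rn.
Qed.

Lemma char_nonlin (i : Iirr G) : ~~ ('chi_i \is a linear_char) ->
  ((\sum_(y in C) 'chi_i y) - (\sum_(y in C) 'chi_i y)^*) / 'chi_i 1%g
    \in [:: 2%:R ^+ n * 'i; - (2%:R ^+ n * 'i)].
Proof.
move=> hnl; have [c hc] := Mi_scalar i.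
have hMP : c *: Pi i = 0 by rewrite -mul_scalar_mx -hc MiP.
have hM2 := MiM2 i; rewrite hc -scalar_mxM in hM2.
have c0 : c != 0.
  apply/eqP => c0; move: hM2; rewrite c0 mul0r => hM2.
  have hP : Pi i = N *: 1%:M.
    apply: (scalerI N_neq0); rewrite scalerA.
    apply/eqP; rewrite -subr_eq0; apply/eqP.
    have e : N *: Pi i - (N * N) *: 1%:M = - (N * N) *: 1%:M + N *: Pi i.
      by rewrite addrC scaleNr.
    by rewrite e -hM2 raddf0.
  move/negP: hnl; apply; apply: rker_Z => z z0.
  have := rhoZ i z0; rewrite hP -scalemxAr mulmx1 => /(scalerI N_neq0).
  done.
have P0 : Pi i = 0 by move/eqP: hMP; rewrite scaler_eq0 (negPf c0) => /eqP.
rewrite P0 scaler0 addr0 scale_scalar_mx mulr1 in hM2.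
have cc : c * c = - (N * N) := tr_scalar_inj hM2.
rewrite chiC_diff -tr_Mi hc mxtrace_scalar irr1_degree -[c *+ _]mulr_natr mulfK ?deg_neq0 //.
rewrite -NE !inE.
have : (c - N * 'i) * (c + N * 'i) = 0.
  have -> : (c - N * 'i) * (c + N * 'i) = c * c - N * N * ('i * 'i) by ring.
  by rewrite mulCii cc mulrN1 opprK addNr.
move/eqP; rewrite mulf_eq0 subr_eq0 addr_eq0.
by case/orP => ->; rewrite ?orbT.
Qed.
End Field.

Unset Implicit Arguments.

Theorem mainTheorem14 (F : finFieldType) (n m : nat) (th : {rmorphism F -> F})
  (C : {set (@Agrp F th)}) :
  #|F| = (2 ^ n)%N -> n = (2 * m + 1)%N -> (3 <= n)%N ->
  gal_generator th ->
  (* C consists of elements of order 4 and is a union of conjugacy classes *)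
  {in C, forall x, #[x]%g = 4%N} ->
  {in C, forall x, (x ^: [set: (@Agrp F th)] \subset C)%g} ->
  (* for each class K of elements of order 4, C contains exactly one of K, K^(-1) *)
  (forall x : (@Agrp F th), #[x]%g = 4%N ->
     ((x ^: [set: (@Agrp F th)])%g \subset C) (+) (((x ^: [set: (@Agrp F th)])^-1)%g \subset C)) ->
  let G := [set: (@Agrp F th)]%G in
  let chiC (i : Iirr G) := \sum_(y in C) 'chi[G]_i y in
  (forall i : Iirr G, 'chi[G]_i \is a linear_char -> chiC i - (chiC i)^* = 0)
  /\ (forall i : Iirr G, 'chi[G]_i \isn't a linear_char ->
        (chiC i - (chiC i)^*) / 'chi[G]_i 1%g \in [:: 2%:R ^+ n * 'i; - (2%:R ^+ n * 'i)])
  /\ (forall a : algC, eigenvalue (skew_adj C) a ->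
        a \in [:: 0; 2%:R ^+ n * 'i; - (2%:R ^+ n * 'i)]).
Proof.
move=> hF hn h3 hgen hC4 hCcl hxor G chiC.
split; [|split].
- move=> i hlin; rewrite /chiC.
  by apply: (char_lin hF hn hgen hC4 hCcl hxor h3 hlin).
- move=> i hnl; rewrite /chiC.
  by apply: (char_nonlin hF hn hgen hC4 hCcl hxor hnl).
- move=> a ha.
  by apply: (eig_main hF hn hgen hC4 hCcl hxor ha).
Qed.
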